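(* Let $n\ge1$. For an $n$-mode Gaussian channel $\phi=\phi(T,N,\mathbf d)$ define $$\mathcal I_d^{GC}(\phi):=h(\|T^{eo}\|_{\mathrm{Tr}})+h(\|T^{oe}\|_{\mathrm{Tr}}\,\|T^{ee}\|_{\mathrm{Tr}})+h(\|N^{oe}\|_{\mathrm{Tr}})+h(\|\mathbf d^{e}\|_1),$$ where $h:[0,\infty)\to\{0,1\}$ is given by $h(0)=0$ and $h(t)=1$ for $t\neq0$. Then $\mathcal I_d^{GC}$ is an imaginarity measure for Gaussian channels: (GC1) $\mathcal I_d^{GC}(\phi)\ge0$ for all $n$-mode Gaussian channels $\phi$, with equality if and only if $\phi$ is real; (GC2) $\mathcal I_d^{GC}(\Phi(\phi))\le\mathcal I_d^{GC}(\phi)$ for every $n$-mode real Gaussian superchannel $\Phi$ and every $n$-mode Gaussian channel $\phi$.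
   Context: Fix $n\ge1$. For a real $2n\times2n$ matrix $M=(m_{kl})$ write the $n\times n$ blocks $M^{oe}=(m_{2k-1,2l})_{k,l=1}^n$, $M^{eo}=(m_{2k,2l-1})_{k,l=1}^n$, $M^{ee}=(m_{2k,2l})_{k,l=1}^n$, and for $\mathbf d=(d_1,\dots,d_{2n})^{\mathrm T}$ write $\mathbf d^e=(d_2,d_4,\dots,d_{2n})^{\mathrm T}$. $\|\cdot\|_{\mathrm{Tr}}$ is the trace norm of matrices and $\|\cdot\|_1$ the $\ell_1$-norm of vectors. Let $\Delta_n=\bigoplus_{k=1}^n\begin{pmatrix}0&1\\-1&0\end{pmatrix}$ and $\Sigma_n=\bigoplus_{k=1}^n\mathrm{diag}(1,-1)$. An $n$-mode Gaussian channel is identified with a triple $\phi=\phi(T,N,\mathbf d)$, where $T=(t_{kl})$, $N=(n_{kl})$ are real $2n\times2n$ matrices with $N=N^{\mathrm T}\ge0$, $\mathbf d\in\mathbb R^{2n}$, and $N+i\Delta_n-iT\Delta_nT^{\mathrm T}\ge0$. It is called real if $d_{2k}=0$ and $n_{2k-1,2l}=0$ for all $k,l\in\{1,\dots,n\}$, and either $t_{2k,2l-1}=t_{2k,2l}=0$ for all $k,l$, or $t_{2k-1,2l}=t_{2k,2l-1}=0$ for all $k,l$. An $n$-mode Gaussian superchannel is a quadruple $\Phi=\Phi(A,O,Y,\bar{\mathbf d})$ of real $2n\times2n$ matrices $A,O,Y$ and $\bar{\mathbf d}\in\mathbb R^{2n}$ with $Y=Y^{\mathrm T}$, $OO^{\mathrm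 T}=I_{2n}$, $Y+i\Delta_n-iA\Delta_nA^{\mathrm T}\ge0$, $i\Delta_n-iO\Delta_nO^{\mathrm T}\ge0$, acting by $\Phi(\phi(T,N,\mathbf d))=\phi(AT\Sigma_nO^{\mathrm T}\Sigma_n,\ ANA^{\mathrm T}+Y,\ A\mathbf d+\bar{\mathbf d})$. It is called real if it maps every real Gaussian channel to a real Gaussian channel. *)

(* Defs.v *)
From HB Require Import structures.
From mathcomp Require Import all_boot all_order all_algebra.
From mathcomp Require Import zify.
From mathcomp Require Import boolp classical_sets reals.
From mathcomp Require Import complex.
Set Implicit Arguments. Unset Strict Implicit. Unset Printing Implicit Defensive.
Import Order.TTheory GRing.Theory Num.Theory.
Local Open Scope ring_scope.

Section GaussDefs.
Variable R : realType.
Variable n : nat.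

(* 1-based index 2k-1 (odd) is 0-based 2k'; 1-based index 2k (even) is 0-based 2k'+1,
   where k' = k-1 : 'I_n *)
Lemma oix_lt (k : 'I_n) : (2 * k < 2 * n)%N.
Proof. have := ltn_ord k; lia. Qed.
Lemma eix_lt (k : 'I_n) : (2 * k + 1 < 2 * n)%N.
Proof. have := ltn_ord k; lia. Qed.
Definition oix (k : 'I_n) : 'I_(2 * n) := Ordinal (oix_lt k).
Definition eix (k : 'I_n) : 'I_(2 * n) := Ordinal (eix_lt k).

Definition blk_oe (M : 'M[R]_(2 * n)) : 'M[R]_n := \matrix_(k, l) M (oix k) (eix l).
Definition blk_eo (M : 'M[R]_(2 * n)) : 'M[R]_n := \matrix_(k, l) M (eix k) (oix l).
Definition blk_ee (M : 'M[R]_(2 * n)) : 'M[R]_n := \matrix_(k, l) M (eix k) (eix l).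
Definition vec_e (d : 'cV[R]_(2 * n)) : 'cV[R]_n := \col_k d (eix k) 0.

(* Delta_n = direct sum of [[0,1],[-1,0]] ; Sigma_n = direct sum of diag(1,-1) *)
Definition Delta : 'M[R]_(2 * n) :=
  \matrix_(a, b) (if (a./2 == b./2)%N then
                    (if ~~ odd a && odd b then 1 else if odd a && ~~ odd b then -1 else 0)
                  else 0).
Definition Sigma : 'M[R]_(2 * n) :=
  \matrix_(a, b) (if a == b then (if odd a then -1 else 1) else 0).

Definition cpsd (m : nat) (M : 'M[R[i]]_m) : Prop :=
  forall v : 'cV[R[i]]_m, 0 <= ((map_mx (fun z => z^*) v)^T *m M *m v) 0 0.

Definition rpsd (m : nat) (M : 'M[R]_m) : Prop :=
  forall v : 'cV[R]_m, 0 <= (v^T *m M *m v) 0 0.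

Definition cplx (m : nat) (M : 'M[R]_m) : 'M[R[i]]_m := map_mx (fun x => (x%:C)%C) M.

Definition gauss_channel (T N : 'M[R]_(2 * n)) (d : 'cV[R]_(2 * n)) : Prop :=
  N^T = N /\ rpsd N /\
  cpsd (cplx N + 'i%C *: cplx Delta - 'i%C *: cplx (T *m Delta *m T^T)).

Definition real_conds (T N : 'M[R]_(2 * n)) (d : 'cV[R]_(2 * n)) : Prop :=
  (forall k : 'I_n, d (eix k) 0 = 0) /\
  (forall k l : 'I_n, N (oix k) (eix l) = 0) /\
  ((forall k l : 'I_n, T (eix k) (oix l) = 0 /\ T (eix k) (eix l) = 0) \/
   (forall k l : 'I_n, T (oix k) (eix l) = 0 /\ T (eix k) (oix l) = 0)).

Definition real_channel T N d : Prop := gauss_channel T N d /\ real_conds T N d.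

Definition gauss_superchannel (A O Y : 'M[R]_(2 * n)) (db : 'cV[R]_(2 * n)) : Prop :=
  Y^T = Y /\ O *m O^T = 1%:M /\
  cpsd (cplx Y + 'i%C *: cplx Delta - 'i%C *: cplx (A *m Delta *m A^T)) /\
  cpsd ('i%C *: cplx Delta - 'i%C *: cplx (O *m Delta *m O^T)).

Definition sc_T (A O : 'M[R]_(2 * n)) (T : 'M[R]_(2 * n)) : 'M[R]_(2 * n) :=
  A *m T *m Sigma *m O^T *m Sigma.
Definition sc_N (A Y : 'M[R]_(2 * n)) (N : 'M[R]_(2 * n)) : 'M[R]_(2 * n) :=
  A *m N *m A^T + Y.
Definition sc_d (A : 'M[R]_(2 * n)) (db d : 'cV[R]_(2 * n)) : 'cV[R]_(2 * n) :=
  A *m d + db.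

Definition real_superchannel (A O Y : 'M[R]_(2 * n)) (db : 'cV[R]_(2 * n)) : Prop :=
  forall T N d, real_channel T N d ->
    real_channel (sc_T A O T) (sc_N A Y N) (sc_d A db d).

(* trace norm of a real square matrix: sum of singular values, realised as
   sup { tr(O M) | O orthogonal } (von Neumann's variational formula) *)
Definition trnorm (m : nat) (M : 'M[R]_m) : R :=
  sup (fun r : R => exists O : 'M[R]_m, O *m O^T = 1%:M /\ r = \tr (O *m M)).

Definition l1norm (m : nat) (v : 'cV[R]_m) : R := \sum_i `|v i 0|.

Definition hfun (t : R) : R := if t == 0 then 0 else 1.

Definition Id_GC (T N : 'M[R]_(2 * n)) (d : 'cV[R]_(2 * n)) : R :=
  hfun (trnorm (blk_eo T)) + hfun (trnorm (blk_oe T) * trnorm (blk_ee T))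
  + hfun (trnorm (blk_oe N)) + hfun (l1norm (vec_e d)).

End GaussDefs.

(* Main.v *)
Require Import Defs.
From HB Require Import structures.
From mathcomp Require Import all_boot all_order all_algebra.
From mathcomp Require Import boolp classical_sets reals.
From mathcomp Require Import complex.
Import Order.TTheory GRing.Theory Num.Theory.
Local Open Scope ring_scope.
From mathcomp Require Import all_fingroup.
From mathcomp Require Import zify ring lra.
Import Order.TTheory GRing.Theory Num.Theory.
Set Implicit Arguments. Unset Strict Implicit. Unset Printing Implicit Defensive.

Section Aux.
Variable R : realType.
Variable n : nat.
Local Notation I2 := 'I_(2 * n).

Lemma oixE (k : 'I_n) : (oix k : nat) = (2 * k)%N. Proof. by []. Qed.
Lemma eixE (k : 'I_n) : (eix k : nat) = (2 * k + 1)%N. Proof. by []. Qed.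

Lemma oix_eix (k l : 'I_n) : (oix k == eix l) = false.
Proof. apply/eqP => /(congr1 val); rewrite /= => H; lia. Qed.
Lemma eix_oix (k l : 'I_n) : (eix k == oix l) = false.
Proof. by rewrite eq_sym oix_eix. Qed.
Lemma oix_oix (k l : 'I_n) : (oix k == oix l) = (k == l).
Proof. apply/eqP/eqP => [/(congr1 val) /= H|->//]; apply/val_inj => /=; lia. Qed.
Lemma eix_eix (k l : 'I_n) : (eix k == eix l) = (k == l).
Proof. apply/eqP/eqP => [/(congr1 val) /= H|->//]; apply/val_inj => /=; lia. Qed.

Lemma hix_lt (c : I2) : (c./2 < n)%N.
Proof. rewrite ltn_half_double -mul2n; exact: ltn_ord. Qed.
Definition hix (c : I2) : 'I_n := Ordinal (hix_lt c).

Lemma ix_cases (c : I2) : c = oix (hix c) \/ c = eix (hix c).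
Proof.
have := odd_double_half c; case: (odd c) => /= H; [right|left]; apply/val_inj => /=; lia.
Qed.

Lemma sum_split (V : nmodType) (F : I2 -> V) :
  \sum_c F c = \sum_k (F (oix k) + F (eix k)).
Proof.
rewrite (partition_big hix xpredT) //=; apply: eq_bigr => k _.
rewrite (bigD1 (oix k)) /=; last by apply/eqP/val_inj => /=; lia.
rewrite (bigD1 (eix k)) /=; last first.
  by rewrite eix_oix andbT; apply/eqP/val_inj => /=; lia.
rewrite big1 ?addr0 // => c /andP[/andP[/eqP Hc Ho] He].
exfalso; case: (ix_cases c) => Hc'.
  by move: Ho; rewrite Hc' (_ : hix c = k) ?eqxx //; apply/val_inj.
by move: He; rewrite Hc' (_ : hix c = k) ?eqxx //; apply/val_inj.
Qed.

Lemma odd2 (k : nat) : odd (2 * k) = false. Proof. by rewrite mul2n odd_double. Qed.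
Lemma odd21 (k : nat) : odd (2 * k + 1) = true.
Proof. by rewrite addn1 /= mul2n odd_double. Qed.
Lemma Delta_oo (k l : 'I_n) : Delta R n (oix k) (oix l) = 0.
Proof. rewrite mxE /= ?oixE ?odd2 ?odd21 /=. by case: ifP. Qed.
Lemma Delta_ee (k l : 'I_n) : Delta R n (eix k) (eix l) = 0.
Proof. rewrite mxE /= ?eixE ?odd2 ?odd21 /=. by case: ifP. Qed.
Lemma half2 (k : nat) : ((2 * k)./2 = k)%N. Proof. by rewrite mul2n doubleK. Qed.
Lemma half21 (k : nat) : ((2 * k + 1)./2 = k)%N.
Proof. by rewrite addn1 mul2n -uphalfE uphalf_double. Qed.
Lemma Delta_oe (k l : 'I_n) : Delta R n (oix k) (eix l) = (k == l)%:R.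
Proof.
rewrite mxE /= ?oixE ?eixE ?odd2 ?odd21 /= half2 half21.
by have ->: ((k:nat) == l) = (k == l) by []; case: (k == l).
Qed.
Lemma Delta_eo (k l : 'I_n) : Delta R n (eix k) (oix l) = - (k == l)%:R.
Proof.
rewrite mxE /= ?oixE ?eixE ?odd2 ?odd21 /= half2 half21.
by have ->: ((k:nat) == l) = (k == l) by []; case: (k == l); rewrite ?oppr0.
Qed.
Lemma Delta_diag (c : I2) : Delta R n c c = 0.
Proof. by case: (ix_cases c) => ->; rewrite ?Delta_oo ?Delta_ee. Qed.

End Aux.

Section Tr.
Variable R : realType.
Variable m : nat.
Implicit Types M O : 'M[R]_m.

Lemma orth_le1 O a b : O *m O^T = 1%:M -> `|O a b| <= 1.
Proof.
move=> HO.
have H1 : \sum_c O a c * O a c = 1.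
  transitivity (\sum_c O a c * O^T c a); first by apply: eq_bigr => c _; rewrite mxE.
  have := congr1 (fun X : 'M[R]_m => X a a) HO; rewrite !mxE eqxx /=; exact.
have H2 : O a b * O a b <= 1.
  rewrite -H1 (bigD1 b) //= lerDl; apply: sumr_ge0 => c _.
  by rewrite -expr2 sqr_ge0.
have H3 : `|O a b| ^+ 2 = O a b ^+ 2 by rewrite real_normK ?num_real.
have H4 := normr_ge0 (O a b).
rewrite expr2 in H3; rewrite -expr2 in H2.
nra.
Qed.

Definition trset M := (fun r : R => exists O : 'M[R]_m, O *m O^T = 1%:M /\ r = \tr (O *m M)).

Lemma trset_ub M : has_ubound (trset M).
Proof.
exists (\sum_a \sum_b `|M b a|) => r [O [HO ->]].
rewrite /mxtrace; apply: ler_sum => a _; rewrite mxE; apply: ler_sum => b _.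
apply: le_trans (ler_norm _) _; rewrite normrM.
by apply: ler_piMl => //; exact: orth_le1.
Qed.

Lemma trnorm_ge M O : O *m O^T = 1%:M -> \tr (O *m M) <= trnorm M.
Proof. by move=> HO; apply: (ub_le_sup (trset_ub M)); exists O. Qed.

Lemma trnorm0 : trnorm (0 : 'M[R]_m) = 0.
Proof.
rewrite /trnorm (_ : (fun r : R => _) = [set (0:R)]%classic) ?sup1 //.
apply/funext => r; apply/propext; split.
  by move=> [O [_ ->]]; rewrite mulmx0 mxtrace0.
move=> ->; exists 1%:M; by rewrite trmx1 mulmx1 mulmx0 mxtrace0.
Qed.

Lemma trnorm_eq0 M : trnorm M = 0 -> M = 0.
Proof.
move=> HM; apply/matrixP => i j; rewrite mxE; apply/eqP; apply: contraT => Hij.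
exfalso.
pose s : 'I_m -> R := fun a => if M (tperm i j a) a < 0 then -1 else 1.
have sK a : s a * s a = 1 by rewrite /s; case: ifP => _; rewrite ?mulrNN mulr1.
have sM a : s a * M (tperm i j a) a = `|M (tperm i j a) a|.
  rewrite /s; case: ifP => H; first by rewrite ltr0_norm // mulN1r.
  by rewrite ger0_norm ?mul1r // leNgt H.
pose O : 'M[R]_m := \matrix_(a, b) (if tperm i j a == b then s a else 0).
have HO : O *m O^T = 1%:M.
  apply/matrixP => a b; rewrite !mxE (bigD1 (tperm i j a)) //= big1; last first.
    by move=> c /negbTE Hc; rewrite !mxE eq_sym Hc mul0r.
  rewrite !mxE eqxx (inj_eq perm_inj) addr0 eq_sym.
  by case: eqP => [->|_]; rewrite ?sK ?mulr0.
have := trnorm_ge M HO; rewrite HM.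
have -> : \tr (O *m M) = \sum_a `|M (tperm i j a) a|.
  rewrite /mxtrace; apply: eq_bigr => a _; rewrite mxE (bigD1 (tperm i j a)) //= big1.
    by rewrite mxE eqxx addr0 sM.
  by move=> c /negbTE Hc; rewrite mxE eq_sym Hc mul0r.
rewrite (bigD1 j) //= tpermR => H.
have H1 : 0 <= \sum_(a | a != j) `|M (tperm i j a) a| by apply: sumr_ge0.
have H2 : 0 < `|M i j| by rewrite normr_gt0.
lra.
Qed.

End Tr.

Section H.
Variable R : realType.
Lemma hfun_ge0 (x : R) : 0 <= hfun x. Proof. by rewrite /hfun; case: ifP. Qed.
Lemma hfun_le1 (x : R) : hfun x <= 1. Proof. by rewrite /hfun; case: ifP. Qed.
Lemma hfun_eq0 (x : R) : hfun x = 0 <-> x = 0.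
Proof.
rewrite /hfun; split; first by case: ifP => [/eqP //|_ /eqP]; rewrite oner_eq0.
by move=> ->; rewrite eqxx.
Qed.
Lemma hfun_mono (x y : R) : (y = 0 -> x = 0) -> hfun x <= hfun y.
Proof.
move=> H; rewrite {2}/hfun; case: ifP => [/eqP /H ->|_]; last exact: hfun_le1.
by rewrite /hfun eqxx.
Qed.
End H.

Section Cx.
Variable R : realType.
Local Notation C := (R[i]).

Lemma conj_i : ('i%C : C)^* = - 'i%C.
Proof. by apply/eqP; rewrite eq_complex /= oppr0 !eqxx. Qed.
Lemma conj_real (x : R) : ((x%:C)%C : C)^* = (x%:C)%C.
Proof. exact: conjc_real. Qed.

Lemma rc0 : ((0:R)%:C)%C = 0 :> C. Proof. by []. Qed.
Lemma rc1 : ((1:R)%:C)%C = 1 :> C. Proof. by []. Qed.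

Definition qf m (v : 'cV[C]_m) (M : 'M[C]_m) :=
  \sum_b \sum_a (v a 0)^* * M a b * v b 0.

Lemma qfE m (v : 'cV[C]_m) M :
  ((map_mx (fun z => z^*) v)^T *m M *m v) 0 0 = qf v M.
Proof.
rewrite mxE /qf; apply: eq_bigr => b _; rewrite mxE mulr_suml.
by apply: eq_bigr => a _; rewrite !mxE.
Qed.

Lemma cpsdE m (M : 'M[C]_m) : cpsd M <-> forall v, 0 <= qf v M.
Proof. by rewrite /cpsd; split => H v; move: (H v); rewrite qfE. Qed.

Lemma cplxE m (M : 'M[R]_m) a b : cplx M a b = ((M a b)%:C)%C.
Proof. by rewrite mxE. Qed.

Lemma cpsd_cplx1 m : cpsd (cplx (1%:M : 'M[R]_m)).
Proof.
apply/cpsdE => v; rewrite /qf; apply: sumr_ge0 => b _.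
rewrite (bigD1 b) //= big1 ?addr0; last first.
  by move=> a /negbTE Hab; rewrite cplxE mxE Hab /= rc0 mulr0 mul0r.
by rewrite cplxE mxE eqxx /= rc1 mulr1 mulrC mul_conjC_ge0.
Qed.

Lemma rpsd1 m : rpsd (1%:M : 'M[R]_m).
Proof.
move=> v; rewrite mxE; apply: sumr_ge0 => b _; rewrite mxE.
rewrite (bigD1 b) //= big1 ?addr0; last first.
  by move=> a /negbTE Hab; rewrite !mxE Hab mulr0.
by rewrite !mxE eqxx /= mulr1 -expr2 sqr_ge0.
Qed.

Lemma cpsd_re m (N D W : 'M[R]_m) :
  cpsd (cplx N + 'i%C *: cplx D - 'i%C *: cplx W) -> cpsd (cplx N).
Proof.
set K := (X in cpsd X -> _).
move/cpsdE => H; apply/cpsdE => v.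
pose w := map_mx (fun z : C => z^*) v.
have key : qf v K + (qf w K)^* = 2%:R * qf v (cplx N).
  rewrite /qf !rmorph_sum mulr_sumr -big_split; apply: eq_bigr => b _ /=.
  rewrite !rmorph_sum mulr_sumr -big_split; apply: eq_bigr => a _ /=.
  rewrite !mxE !rmorphM !rmorphD ?rmorphN !rmorphM !conjCK /= conj_i !conj_real conjCK.
  ring.
have H0 : 0 <= qf v K + (qf w K)^* by rewrite addr_ge0 ?conjC_ge0.
by move: H0; rewrite key pmulr_rge0 // ltr0n.
Qed.

Section Pair.
Variable n : nat.
Local Notation I2 := 'I_(2 * n).

Lemma sum_split2 (F : I2 -> I2 -> C) :
  \sum_b \sum_a F a b = \sum_l \sum_k
    ((F (oix k) (oix l) + F (eix k) (oix l)) + (F (oix k) (eix l) + F (eix k) (eix l))).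
Proof.
rewrite sum_split; apply: eq_bigr => l _.
by rewrite !sum_split -big_split.
Qed.

Lemma rcN (x : R) : ((- x)%:C)%C = - (x%:C)%C :> C.
Proof. by apply/eqP; rewrite eq_complex /= oppr0 !eqxx. Qed.

Lemma Kent (a b : I2) : (cplx (1%:M : 'M[R]_(2 * n)) + 'i%C *: cplx (Delta R n)) a b
  = (((1%:M : 'M[R]_(2 * n)) a b)%:C)%C + 'i%C * ((Delta R n a b)%:C)%C.
Proof. rewrite [LHS]mxE [X in _ + X = _]mxE !cplxE. by []. Qed.

Lemma cpsd_pair : cpsd (cplx (1%:M : 'M[R]_(2 * n)) + 'i%C *: cplx (Delta R n)).
Proof.
apply/cpsdE => v; rewrite /qf sum_split2; apply: sumr_ge0 => l _.
rewrite (bigD1 l) //= big1 ?addr0; last first.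
  move=> k /negbTE Hkl.
  rewrite !Kent Delta_oo Delta_ee Delta_oe Delta_eo !mxE ?oix_oix ?eix_eix ?oix_eix ?eix_oix Hkl /=.
  by rewrite oppr0 rc0 !mulr0 !add0r !mulr0 !mul0r !addr0.
rewrite !Kent Delta_oo Delta_ee Delta_oe Delta_eo !mxE ?oix_oix ?eix_eix ?oix_eix ?eix_oix eqxx /=.
rewrite rcN rc0 rc1 !mulr0 !addr0 !add0r.
set x := v (oix l) 0; set y := v (eix l) 0.
have -> : x^* * 1 * x + y^* * ('i%C * - 1) * x + (x^* * ('i%C * 1) * y + y^* * 1 * y)
   = (x + 'i%C * y)^* * (x + 'i%C * y).
  rewrite rmorphD rmorphM /= conj_i.
  transitivity (x^* * x + 'i%C * x^* * y - 'i%C * y^* * x + y^* * y); first by ring.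
  transitivity (x^* * x + 'i%C * x^* * y - 'i%C * y^* * x - ('i%C ^+ 2) * y^* * y); last by ring.
  by rewrite sqr_i; ring.
by rewrite mulrC mul_conjC_ge0.
Qed.
End Pair.

End Cx.

Section Main.
Variable R : realType.
Variable n : nat.
Local Notation I2 := 'I_(2 * n).
Local Notation M2 := 'M[R]_(2 * n).

Lemma sum_split2R (V : nmodType) (F : I2 -> I2 -> V) :
  \sum_b \sum_a F a b = \sum_l \sum_k
    ((F (oix k) (oix l) + F (eix k) (oix l)) + (F (oix k) (eix l) + F (eix k) (eix l))).
Proof.
rewrite sum_split; apply: eq_bigr => l _.
by rewrite !sum_split -big_split.
Qed.

Lemma SigmaE (a b : I2) : Sigma R n a b = if a == b then (if odd a then -1 else 1) else 0.
Proof. by rewrite mxE. Qed.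

Lemma Sigma_tr : (Sigma R n)^T = Sigma R n.
Proof.
apply/matrixP => a b; rewrite mxE !SigmaE eq_sym.
by case: eqP => [->|].
Qed.

Lemma Sigma_sq : Sigma R n *m Sigma R n = 1%:M.
Proof.
apply/matrixP => a b; rewrite !mxE (bigD1 a) //= big1 ?addr0; last first.
  by move=> c /negbTE Hc; rewrite !SigmaE eq_sym Hc mul0r.
rewrite !SigmaE eqxx; case: eqP => [->|_]; last by rewrite mulr0.
by case: (odd b); rewrite ?mulrNN mulr1.
Qed.

Definition Smx (O : M2) : M2 := Sigma R n *m O^T *m Sigma R n.

Lemma S_orth (O : M2) : O *m O^T = 1%:M ->
  Smx O *m (Smx O)^T = 1%:M /\ (Smx O)^T *m Smx O = 1%:M.
Proof.
move=> HO; have HO' := mulmx1C HO.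
have H1 : Smx O *m (Smx O)^T = 1%:M.
  rewrite /Smx !trmx_mul trmxK Sigma_tr.
  rewrite -!mulmxA (mulmxA (Sigma R n) (Sigma R n)) Sigma_sq mul1mx.
  by rewrite (mulmxA O^T O) HO' mul1mx Sigma_sq.
by split => //; apply: mulmx1C.
Qed.

Lemma row_nz (S : M2) b : S *m S^T = 1%:M -> exists y, S b y != 0.
Proof.
move=> HS; have H1 : (S *m S^T) b b = 1%:M b b by rewrite HS.
apply/existsP; apply: contraT; rewrite negb_exists => /forallP H.
move: H1; rewrite !mxE eqxx /= big1.
  by move/eqP; rewrite eq_sym oner_eq0.
by move=> c _; move: (H c); rewrite negbK => /eqP ->; rewrite mul0r.
Qed.

Lemma scT_E (A O T : M2) : sc_T A O T = A *m T *m Smx O.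
Proof. by rewrite /sc_T /Smx !mulmxA. Qed.

Lemma ATS_E (A T S : M2) x y :
  (A *m T *m S) x y = \sum_d \sum_c A x c * T c d * S d y.
Proof.
rewrite mxE; apply: eq_bigr => d _; rewrite mxE mulr_suml.
by apply: eq_bigr => c _; rewrite ?mxE.
Qed.

Lemma real_T_conds (T N : M2) d : real_conds T N d ->
  (forall k l, T (eix k) (oix l) = 0) /\
  ((forall k l, T (eix k) (eix l) = 0) \/ (forall k l, T (oix k) (eix l) = 0)).
Proof.
move=> [_ [_ [H|H]]]; split.
- by move=> k l; case: (H k l).
- by left => k l; case: (H k l).
- by move=> k l; case: (H k l).
- by right => k l; case: (H k l).
Qed.

Lemma gauss1 (N : M2) (d : 'cV[R]_(2 * n)) : N^T = N -> rpsd N -> cpsd (cplx N) ->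
  gauss_channel 1%:M N d.
Proof.
move=> H1 H2 H3; split => //; split => //.
by rewrite mul1mx trmx1 mulmx1 addrK.
Qed.

Lemma real_conds1 (N : M2) (d : 'cV[R]_(2 * n)) : (forall k, d (eix k) 0 = 0) ->
  (forall k l, N (oix k) (eix l) = 0) -> real_conds 1%:M N d.
Proof.
move=> Hd HN; split => //; split => //; right => k l.
by rewrite !mxE oix_eix eix_oix.
Qed.

Definition Tt (u : I2 -> R) (b : I2) : M2 := \matrix_(x, y) (if y == b then u x else 0).

Lemma TtE u b x y : Tt u b x y = if y == b then u x else 0.
Proof. by rewrite /Tt mxE. Qed.

Lemma TtD u b x d : (Tt u b *m Delta R n) x d = u x * Delta R n b d.
Proof.
rewrite mxE (bigD1 b) //= big1 ?addr0; first by rewrite TtE eqxx.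
by move=> c /negbTE Hc; rewrite TtE Hc mul0r.
Qed.

Lemma Tt_Delta u b : Tt u b *m Delta R n *m (Tt u b)^T = 0.
Proof.
apply/matrixP => x y; rewrite mxE [RHS]mxE big1 // => d _.
rewrite TtD [(Tt u b)^T d y]mxE TtE; case: (eqVneq d b) => [->|Hd].
  by rewrite Delta_diag mulr0 mul0r.
by rewrite mulr0.
Qed.

Lemma gaussTt u b (d : 'cV[R]_(2 * n)) : gauss_channel (Tt u b) 1%:M d.
Proof.
split; first by rewrite trmx1.
split; first exact: rpsd1.
rewrite Tt_Delta (_ : cplx 0 = 0); last by apply/matrixP => x y; rewrite !mxE.
by rewrite scaler0 subr0; apply: cpsd_pair.
Qed.

Lemma realTt u l0 : (forall k, u (oix k) = 0) ->
  real_channel (Tt u (eix l0)) 1%:M 0.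
Proof.
move=> Hu; split; first exact: gaussTt.
split; first by move=> k; rewrite mxE.
split; first by move=> k l; rewrite !mxE oix_eix.
right => k l; rewrite !TtE eix_eix oix_eix Hu; split => //.
by case: ifP.
Qed.

Lemma Tt_out (A S : M2) u b x y :
  (A *m Tt u b *m S) x y = (\sum_c A x c * u c) * S b y.
Proof.
rewrite ATS_E (bigD1 b) //= [X in _ + X]big1 ?addr0; last first.
  by move=> d /negbTE Hd; apply: big1 => c _; rewrite TtE Hd mulr0 mul0r.
rewrite mulr_suml; apply: eq_bigr => c _; by rewrite TtE eqxx.
Qed.


Lemma trz m (B : 'M[R]_m) : trnorm B = 0 <-> B = 0.
Proof. by split => [/trnorm_eq0|->]; rewrite ?trnorm0. Qed.

Lemma blk_eo0 (M : M2) : blk_eo M = 0 <-> forall k l, M (eix k) (oix l) = 0.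
Proof.
split => [H k l|H]; last by apply/matrixP => k l; rewrite !mxE H.
by have := congr1 (fun X : 'M[R]_n => X k l) H; rewrite !mxE.
Qed.
Lemma blk_oe0 (M : M2) : blk_oe M = 0 <-> forall k l, M (oix k) (eix l) = 0.
Proof.
split => [H k l|H]; last by apply/matrixP => k l; rewrite !mxE H.
by have := congr1 (fun X : 'M[R]_n => X k l) H; rewrite !mxE.
Qed.
Lemma blk_ee0 (M : M2) : blk_ee M = 0 <-> forall k l, M (eix k) (eix l) = 0.
Proof.
split => [H k l|H]; last by apply/matrixP => k l; rewrite !mxE H.
by have := congr1 (fun X : 'M[R]_n => X k l) H; rewrite !mxE.
Qed.

Lemma l1_0 (d : 'cV[R]_(2 * n)) : l1norm (vec_e d) = 0 <-> forall k, d (eix k) 0 = 0.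
Proof.
split => [H k|H]; last by rewrite /l1norm big1 // => k _; rewrite mxE H normr0.
have := psumr_eq0P (P := xpredT) (fun i _ => normr_ge0 (vec_e d i 0)) H (i := k) isT.
by rewrite mxE => /eqP; rewrite normr_eq0 => /eqP.
Qed.

Lemma h_eo (M : M2) : hfun (trnorm (blk_eo M)) = 0 <-> forall k l, M (eix k) (oix l) = 0.
Proof. by rewrite hfun_eq0 trz blk_eo0. Qed.
Lemma h_oe (M : M2) : hfun (trnorm (blk_oe M)) = 0 <-> forall k l, M (oix k) (eix l) = 0.
Proof. by rewrite hfun_eq0 trz blk_oe0. Qed.
Lemma h_prod (M : M2) : hfun (trnorm (blk_oe M) * trnorm (blk_ee M)) = 0 <->
  (forall k l, M (oix k) (eix l) = 0) \/ (forall k l, M (eix k) (eix l) = 0).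
Proof.
rewrite hfun_eq0 -blk_oe0 -blk_ee0 -!trz; split => [/eqP|]; first by rewrite mulf_eq0 => /orP[/eqP|/eqP]; tauto.
by case => ->; rewrite ?mul0r ?mulr0.
Qed.
Lemma h_d (d : 'cV[R]_(2 * n)) : hfun (l1norm (vec_e d)) = 0 <-> forall k, d (eix k) 0 = 0.
Proof. by rewrite hfun_eq0 l1_0. Qed.

Lemma sum4_eq0 (a b c e : R) : 0 <= a -> 0 <= b -> 0 <= c -> 0 <= e ->
  (a + b + c + e = 0 <-> [/\ a = 0, b = 0, c = 0 & e = 0]).
Proof.
move=> ha hb hc he; split => [H|[-> -> -> ->]]; last by rewrite !addr0.
split; lra.
Qed.

Lemma GC1 (T N : M2) d : gauss_channel T N d ->
  0 <= Id_GC T N d /\ (Id_GC T N d = 0 <-> real_channel T N d).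
Proof.
move=> HG; rewrite /Id_GC; split.
  by rewrite !addr_ge0 ?hfun_ge0.
rewrite sum4_eq0 ?hfun_ge0 //; split.
  case=> /h_eo H1 /h_prod H2 /h_oe H3 /h_d H4; split => //; split => //; split => //.
  case: H2 => H2; [right|left] => k l; split => //.
case=> _ HR; have [H1 H2] := real_T_conds HR; case: HR => H4 [H3 _].
split; [exact/h_eo | apply/h_prod | exact/h_oe | exact/h_d].
by case: H2; tauto.
Qed.

Lemma ATS_split (A T S : M2) x y : (A *m T *m S) x y = \sum_m \sum_j
  ((A x (oix j) * T (oix j) (oix m) * S (oix m) y + A x (eix j) * T (eix j) (oix m) * S (oix m) y)
 + (A x (oix j) * T (oix j) (eix m) * S (eix m) y + A x (eix j) * T (eix j) (eix m) * S (eix m) y)).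
Proof. by rewrite ATS_E sum_split2R. Qed.

Definition ind (j : 'I_n) : I2 -> R := fun c => if c == eix j then 1 else 0.
Lemma alpha_ind (A : M2) x j : \sum_c A x c * ind j c = A x (eix j).
Proof.
rewrite (bigD1 (eix j)) //= big1 ?addr0 /ind ?eqxx ?mulr1 //.
by move=> c /negbTE ->; rewrite mulr0.
Qed.
Lemma ind_o j k : ind j (oix k) = 0.
Proof. by rewrite /ind oix_eix. Qed.


Lemma GC2 (hn : (1 <= n)%N) (A O Y : M2) (db : 'cV[R]_(2 * n)) (T N : M2) (d : 'cV[R]_(2 * n)) :
  gauss_superchannel A O Y db -> real_superchannel A O Y db ->
  gauss_channel T N d ->
  Id_GC (sc_T A O T) (sc_N A Y N) (sc_d A db d) <= Id_GC T N d.
Proof.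
move=> [_ [HO _]] HR HG.
have [HS1 HS2] := S_orth HO.
set S := Smx O in HS1 HS2.
have HscT : forall T0, sc_T A O T0 = A *m T0 *m S by move=> T0; rewrite scT_E.
clearbody S.
have N1 : forall k l : 'I_n, (1%:M : M2) (oix k) (eix l) = 0.
  by move=> k l; rewrite mxE oix_eix.
have Hd : forall d0 : 'cV[R]_(2 * n), (forall k, d0 (eix k) 0 = 0) ->
    forall k, sc_d A db d0 (eix k) 0 = 0.
  move=> d0 Hd0 k.
  have G : real_channel 1%:M 1%:M d0.
    split; [apply: gauss1; [exact: trmx1|exact: rpsd1|exact: cpsd_cplx1]|exact: real_conds1].
  by case: (HR _ _ _ G) => _ [H _]; exact: H.
have Hdb : forall k, db (eix k) 0 = 0.
  move=> k; have Hz : forall k, (0 : 'cV[R]_(2 * n)) (eix k) 0 = 0 by move=> k'; rewrite mxE.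
  have := Hd 0 Hz k.
  by rewrite /sc_d mulmx0 add0r.
have HAeo : forall k j, A (eix k) (oix j) = 0.
  move=> k j; pose d0 : 'cV[R]_(2 * n) := delta_mx (oix j) 0.
  have Hz : forall k, d0 (eix k) 0 = 0 by move=> k'; rewrite mxE eix_oix.
  have := Hd d0 Hz k.
  rewrite /sc_d mxE Hdb addr0 mxE (bigD1 (oix j)) //= big1 ?addr0.
    by rewrite mxE !eqxx mulr1.
  by move=> c /negbTE Hc; rewrite mxE Hc mulr0.
have HNout : (forall k l, N (oix k) (eix l) = 0) ->
    forall k l, sc_N A Y N (oix k) (eix l) = 0.
  move=> HNoe k l; case: HG => HN1 [HN2 HN3].
  have G : real_channel 1%:M N 0.
    split; [apply: gauss1 => //; exact: cpsd_re HN3|apply: real_conds1 => // k'; by rewrite mxE].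
  by case: (HR _ _ _ G) => _ [_ [H _]]; exact: H.
have HTt : forall (u : I2 -> R) l0, (forall k, u (oix k) = 0) ->
    (forall k m, (\sum_c A (eix k) c * u c) * S (eix l0) (oix m) = 0) /\
    ((forall k m, (\sum_c A (eix k) c * u c) * S (eix l0) (eix m) = 0) \/
     (forall k m, (\sum_c A (oix k) c * u c) * S (eix l0) (eix m) = 0)).
  move=> u l0 Hu; have [_ HRo] := HR _ _ _ (realTt l0 Hu).
  have := real_T_conds HRo; rewrite HscT.
  by case=> H1 H2; split; [move=> k m; rewrite -Tt_out H1|
     case: H2 => H2; [left|right] => k m; rewrite -Tt_out H2].
pose k0 : 'I_n := Ordinal hn.
have Key1 : forall u : I2 -> R, (forall k, u (oix k) = 0) ->
    (forall k, \sum_c A (oix k) c * u c = 0) \/ (forall k, \sum_c A (eix k) c * u c = 0).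
  move=> u Hu; case: (pselect (forall k, \sum_c A (oix k) c * u c = 0)) => [|Hn]; first by left.
  right => k; apply/eqP; apply: contraT => Hk; exfalso.
  move/existsNP: Hn => [k1 /eqP Hk1].
  have [y Hy] := row_nz (eix k0) HS1.
  have [H1 H2] := HTt u k0 Hu.
  case: (ix_cases y) => Hy'; rewrite Hy' in Hy.
    by move/eqP: (H1 k (hix y)); rewrite mulf_eq0 (negbTE Hk) (negbTE Hy).
  case: H2 => H2.
    by move/eqP: (H2 k (hix y)); rewrite mulf_eq0 (negbTE Hk) (negbTE Hy).
  by move/eqP: (H2 k1 (hix y)); rewrite mulf_eq0 (negbTE Hk1) (negbTE Hy).
have HT : ((forall k l, T (eix k) (oix l) = 0) -> forall k l, sc_T A O T (eix k) (oix l) = 0) /\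
    (((forall k l, T (oix k) (eix l) = 0) \/ (forall k l, T (eix k) (eix l) = 0)) ->
     (forall k l, sc_T A O T (oix k) (eix l) = 0) \/ (forall k l, sc_T A O T (eix k) (eix l) = 0)).
  case: (pselect (forall k j, A (eix k) (eix j) = 0)) => [HAee|HAee].
    have Hrow : forall k y, sc_T A O T (eix k) y = 0.
      move=> k y; rewrite HscT ATS_split big1 // => m _; rewrite big1 // => j _.
      by rewrite !HAeo !HAee !mul0r !addr0.
    by split; [move=> _ k l; exact: Hrow | move=> _; right => k l; exact: Hrow].
  move/existsNP: HAee => [k0' /existsNP [j0 Hj0]].
  have Hj0' : A (eix k0') (eix j0) != 0 by apply/eqP.
  have HU : forall l m, S (eix l) (oix m) = 0.
    move=> l m; have [H1 _] := HTt (ind j0) l (ind_o j0).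
    by move/eqP: (H1 k0' m); rewrite alpha_ind mulf_eq0 (negbTE Hj0') => /eqP.
  have HAoe : forall k j, A (oix k) (eix j) = 0.
    move=> k1 j1; apply/eqP; apply: contraT => Hk1; exfalso.
    have E0 : forall k, A (oix k) (eix j0) = 0.
      case: (Key1 _ (ind_o j0)) => H; first by move=> k; rewrite -(alpha_ind A _ j0) H.
      by move: (H k0'); rewrite alpha_ind => /eqP; rewrite (negbTE Hj0').
    have E1 : forall k, A (eix k) (eix j1) = 0.
      case: (Key1 _ (ind_o j1)) => H; last by move=> k; rewrite -(alpha_ind A _ j1) H.
      by move: (H k1); rewrite alpha_ind => /eqP; rewrite (negbTE Hk1).
    pose u2 := fun c => ind j0 c + ind j1 c.
    have Hu2 : forall k, u2 (oix k) = 0 by move=> k; rewrite /u2 !ind_o addr0.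
    have al2 : forall x, \sum_c A x c * u2 c = A x (eix j0) + A x (eix j1).
      move=> x; rewrite -!alpha_ind -big_split /=; apply: eq_bigr => c _.
      by rewrite /u2 mulrDr.
    case: (Key1 u2 Hu2) => H.
      by move: (H k1); rewrite al2 E0 add0r => /eqP; rewrite (negbTE Hk1).
    by move: (H k0'); rewrite al2 E1 addr0 => /eqP; rewrite (negbTE Hj0').
  have HP : (\matrix_(k, l) S (oix k) (oix l))^T *m (\matrix_(k, l) S (oix k) (oix l))
      = 1%:M :> 'M[R]_n.
    apply/matrixP => k l.
    have E : (S^T *m S) (oix k) (oix l) = (1%:M : M2) (oix k) (oix l) by rewrite HS2.
    rewrite !mxE; move: E; rewrite !mxE oix_oix sum_split => <-.
    by apply: eq_bigr => m _; rewrite !mxE !HU mul0r addr0.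
  have HP' := mulmx1C HP.
  have HQ : forall l m, S (oix l) (eix m) = 0.
    move=> l m.
    have E : (S *m S^T) (oix l) (oix l) = (1%:M : M2) (oix l) (oix l) by rewrite HS1.
    have F := congr1 (fun X : 'M[R]_n => X l l) HP'.
    have H2 : \sum_(m0 < n) S (oix l) (eix m0) * S (oix l) (eix m0) = 0.
      move: E F; rewrite /= !mxE !eqxx sum_split big_split /=.
      have e1 : \sum_(i < n) S (oix l) (oix i) * S^T (oix i) (oix l)
          = \sum_(i < n) S (oix l) (oix i) * S (oix l) (oix i).
        by apply: eq_bigr => i _; rewrite mxE.
      have e2 : \sum_(i < n) S (oix l) (eix i) * S^T (eix i) (oix l)
          = \sum_(i < n) S (oix l) (eix i) * S (oix l) (eix i).
        by apply: eq_bigr => i _; rewrite mxE.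
      have e3 : \sum_(j < n) (\matrix_(k, l0) S (oix k) (oix l0)) l j *
         (\matrix_(k, l0) S (oix k) (oix l0))^T j l
          = \sum_(i < n) S (oix l) (oix i) * S (oix l) (oix i).
        by apply: eq_bigr => i _; rewrite !mxE.
      rewrite e1 e2 e3; move=> E F; lra.
    have := psumr_eq0P (P := xpredT) _ H2 (i := m) isT.
    move=> H3; have /eqP := H3 (fun i _ => ltac:(by rewrite -expr2 sqr_ge0)).
    by rewrite mulf_eq0 orbb => /eqP.
  split.
    move=> HTeo k l; rewrite HscT ATS_split big1 // => m _; rewrite big1 // => j _.
    rewrite !HAeo HTeo HU; ring.
  case=> HT'; [left|right] => k l; rewrite HscT ATS_split big1 // => m _;
    rewrite big1 // => j _.
    rewrite !HAoe HQ HT'; ring.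
  rewrite !HAeo HQ HT'; ring.
case: HT => HT1 HT2.
rewrite /Id_GC; apply: lerD; [apply: lerD; [apply: lerD|]|].
- by apply: hfun_mono => /trz/blk_eo0/HT1/blk_eo0/trz.
- apply: hfun_mono => /eqP; rewrite mulf_eq0 => Hy.
  have : (forall k l, T (oix k) (eix l) = 0) \/ (forall k l, T (eix k) (eix l) = 0).
    by case/orP: Hy => /eqP/trz; [move/blk_oe0; left|move/blk_ee0; right].
  by move/HT2 => [/blk_oe0/trz -> | /blk_ee0/trz ->]; rewrite ?mul0r ?mulr0.
- by apply: hfun_mono => /trz/blk_oe0/HNout/blk_oe0/trz.
- apply: hfun_mono => /l1_0 H; apply/l1_0; exact: Hd d H.
Qed.

End Main.

Unset Implicit Arguments.

Theorem theorem4 (R : realType) (n : nat) (hn : (1 <= n)%N) :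
  (forall (T N : 'M[R]_(2 * n)) (d : 'cV[R]_(2 * n)),
      gauss_channel T N d ->
      0 <= Id_GC T N d /\ (Id_GC T N d = 0 <-> real_channel T N d)) /\
  (forall (A O Y : 'M[R]_(2 * n)) (db : 'cV[R]_(2 * n))
          (T N : 'M[R]_(2 * n)) (d : 'cV[R]_(2 * n)),
      gauss_superchannel A O Y db -> real_superchannel A O Y db ->
      gauss_channel T N d ->
      Id_GC (sc_T A O T) (sc_N A Y N) (sc_d A db d) <= Id_GC T N d).
Proof.
split.
  by move=> T N d HG; exact: GC1.
by move=> A O Y db T N d H1 H2 H3; exact: (GC2 hn H1 H2 H3).
Qed.
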